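(* Let $f$ be a multiplicative function with $f(n)=o(n^\delta)$ for some $\delta>0$, and let $\sigma>\delta$. Then for all but finitely many primes $p$, the series $\sum_{n=0}^\infty\frac{|D_f(n,p)|}{p^{n\sigma}}$ is convergent, and these sums are bounded uniformly in $p$.
   Context: For a prime $p$ and integer $k\ge1$, $D_f(k,p)$ is the determinant of the $k\times k$ matrix $(a_{ij})$ with $a_{ij}=f(p^{i-j+1})$ if $i-j+1\ge0$ and $a_{ij}=0$ otherwise; $D_f(0,p)=1$. *)

(* Defs.v *)
From mathcomp Require Import all_boot all_order all_algebra.
From mathcomp Require Import all_classical all_reals all_analysis.
From mathcomp Require Import complex.
Set Implicit Arguments. Unset Strict Implicit. Unset Printing Implicit Defensive.
Import Order.TTheory GRing.Theory Num.Theory.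
Local Open Scope ring_scope.

Definition cmod (R : realType) (z : R[i]) : R := ComplexField.Normc.normc z.

Definition arith_multiplicative (R : realType) (f : nat -> R[i]) : Prop :=
  f 1%N = 1 /\ forall m n : nat, coprime m n -> f (m * n)%N = f m * f n.

Definition little_o_pow (R : realType) (f : nat -> R[i]) (delta : R) : Prop :=
  forall eps : R, 0 < eps ->
    exists N : nat, forall n : nat, (N <= n)%N ->
      cmod (f n) <= eps * (n%:R `^ delta).

(* The k x k matrix (a_ij), a_ij = f(p^(i-j+1)) if i-j+1 >= 0, else 0.
   With 0-based indices i j : 'I_k the condition i-j+1 >= 0 is j <= i+1. *)
Definition Dmat (R : realType) (f : nat -> R[i]) (k p : nat) : 'M[R[i]]_k :=
  \matrix_(i < k, j < k) (if (j <= i.+1)%N then f (p ^ (i.+1 - j))%N else 0).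

(* D_f(k,p); for k = 0 this is the determinant of the empty matrix, i.e. 1. *)
Definition D_f (R : realType) (f : nat -> R[i]) (k p : nat) : R[i] :=
  \det (Dmat f k p).

Definition Dterm (R : realType) (f : nat -> R[i]) (sigma : R) (p n : nat) : R :=
  cmod (D_f f n p) / (p%:R `^ (n%:R * sigma)).

(* Main.v *)
Set Warnings "-notation-overridden,-ambiguous-paths,-notation-incompatible-prefix".
Require Import Defs.
From mathcomp Require Import all_boot all_order all_algebra.
From mathcomp Require Import all_classical all_reals all_analysis.
From mathcomp Require Import complex.
From mathcomp Require Import ring lra.
Import Order.TTheory GRing.Theory Num.Theory numFieldTopology.Exports numFieldNormedType.Exports.
Local Open Scope ring_scope.

Section Mat.
Variable R : realType.

Definition Mc (g c : nat -> R[i]) k : 'M[R[i]]_k :=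
  \matrix_(i < k, j < k) (if j == 0%N :> nat then c i
     else if (j <= i.+1)%N then g (i.+1 - j)%N else 0).

Lemma minor0 g c k :
  row' ord0 (col' ord0 (Mc g c k.+1)) = Mc g (fun i => g i.+1) k.
Proof.
apply/matrixP => i j; rewrite !mxE /=.
case: eqP => [->|/eqP j0] //.
Qed.

Lemma minor1 g c k :
  row' ord0 (col' (lift ord0 ord0) (Mc g c k.+2)) = Mc g (fun i => c i.+1) k.+1.
Proof.
apply/matrixP => i j; rewrite !mxE /=.
rewrite /bump /=; case: j => [[|j] hj] //=.
Qed.

Lemma cmodM (x y : R[i]) : cmod (x * y) = cmod x * cmod y.
Proof. exact: ComplexField.Normc.normcM. Qed.

Lemma cmodD (x y : R[i]) : cmod (x + y) <= cmod x + cmod y.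
Proof. exact: (@le_normcD R x y). Qed.

Lemma cmodN (x : R[i]) : cmod (- x) = cmod x.
Proof. exact: (@normcN R x). Qed.

Lemma cmod_ge0 (x : R[i]) : 0 <= cmod x.
Proof. by case: x => a b; rewrite /cmod /= sqrtr_ge0. Qed.

Lemma cmod0 : cmod (0 : R[i]) = 0.
Proof. exact: ComplexField.Normc.normc0. Qed.

Lemma detMc_bound (g : nat -> R[i]) (q : R) : 1 <= q ->
  (forall m, cmod (g m) <= q ^+ m) ->
  forall k (a : R) c, 1 <= a -> (forall i, cmod (c i) <= a * q ^+ i.+1) ->
  cmod (\det (Mc g c k)) <= a * (2 * q) ^+ k.
Proof.
move=> q1 hg; elim=> [|k IH] a c a1 hc.
  by rewrite det_mx00 expr0 mulr1 /cmod ComplexField.Normc.normc1.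
have q0 : 0 <= q by apply: le_trans q1.
have a0 : 0 <= a by apply: le_trans a1.
rewrite (expand_det_row _ ord0) big_ord_recl.
have E0 : cmod (Mc g c k.+1 ord0 ord0 * cofactor (Mc g c k.+1) ord0 ord0)
   <= a * q * (2 * q) ^+ k.
  rewrite /cofactor minor0 /= expr0 mul1r cmodM mxE /=.
  apply: ler_pM; rewrite ?cmod_ge0 //.
  have := IH 1 (fun i => g i.+1) (lexx _) => /(_ _); rewrite mul1r.
  by apply=> i; rewrite mul1r; apply: hg.
case: k IH E0 => [|k] IH E0.
  rewrite big_ord0 addr0; apply: (le_trans E0).
  rewrite !expr0 !mulr1 expr1 ler_pM2l ?(lt_le_trans ltr01 a1) //.
  by rewrite -[X in X <= _]mul1r ler_pM2r ?(lt_le_trans ltr01 q1) // ler1n.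
rewrite big_ord_recl.
rewrite big1; last first.
  move=> j _; rewrite mxE /= /bump /=.
  by rewrite mul0r.
rewrite addr0.
apply: (le_trans (cmodD _ _)).
have E1 : cmod (Mc g c k.+2 ord0 (lift ord0 ord0) * cofactor (Mc g c k.+2) ord0 (lift ord0 ord0))
   <= a * q * (2 * q) ^+ k.+1.
  rewrite /cofactor minor1 /= expr1 mulN1r cmodM cmodN mxE /=.
  rewrite -[a * q * _]mul1r.
  apply: ler_pM; rewrite ?cmod_ge0 //.
  apply: IH.
    by rewrite -[1]mulr1 ler_pM.
  by move=> i; rewrite -mulrA -exprS; apply: hc.
apply: (le_trans (lerD E0 E1)).
by rewrite le_eqVlt; apply/orP; left; apply/eqP; rewrite !exprS; ring.
Qed.


Lemma Dmat_Mc (f : nat -> R[i]) k p :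
  Dmat f k p = Mc (fun m => f (p ^ m)%N) (fun i => f (p ^ i.+1)%N) k.
Proof. by apply/matrixP => i j; rewrite !mxE; case: eqP => // ->; rewrite subn0. Qed.

Lemma series_half_bound (u : nat -> R) :
  (forall n, 0 <= u n) -> (forall n, u n <= (2^-1) ^+ n) ->
  cvgn (series u) /\ limn (series u) <= 2.
Proof.
move=> u0 uh.
have h1 : `|(2^-1 : R)| < 1.
  by rewrite ger0_norm ?invr_ge0 ?ler0n // invf_lt1 ?ltr0n // ltr1n.
have cv : cvgn (series u).
  apply: (@series_le_cvg _ u (geometric 1 (2^-1))) => //.
  - by move=> n; rewrite /geometric /= mul1r exprn_ge0 // invr_ge0 ler0n.
  - by move=> n; rewrite /geometric /= mul1r.
  - exact: is_cvg_geometric_series.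
split => //; apply: limr_le => //; apply: nearW => n /=.
apply: (@le_trans _ _ (series (geometric 1 (2^-1)) n)).
  by rewrite /series /=; apply: ler_sum => k _; rewrite /geometric /= mul1r.
apply: (le_trans (geometric_le_lim n ler01 _ h1)).
  by rewrite invr_gt0 ltr0n.
rewrite mul1r le_eqVlt; apply/orP; left; apply/eqP.
have -> : (1 - 2^-1 : R) = 2^-1 by field.
by rewrite invrK.
Qed.

End Mat.

Theorem lemma5 (R : realType) (f : nat -> R[i]) (delta sigma : R) :
  arith_multiplicative f -> 0 < delta -> little_o_pow f delta -> delta < sigma ->
  exists P0 : nat,
    (forall p : nat, prime p -> (P0 <= p)%N ->
       cvgn (series (Dterm f sigma p))) /\
    (exists M : R, forall p : nat, prime p -> (P0 <= p)%N ->
       limn (series (Dterm f sigma p)) <= M).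
Proof.
move=> [f1 _] d0 lo ds.
have [N hN] := lo 1 ltr01.
set r := sigma - delta.
have r0 : 0 < r by rewrite subr_gt0.
set K := (Num.truncn (4 `^ r^-1 : R)).+1.
have hK : 4 `^ r^-1 <= K%:R :> R.
  by apply: ltW; apply: real_truncnS_gt; apply: num_real.
have key : forall p, prime p -> (maxn (maxn N K) 2 <= p)%N -> forall n,
    0 <= Dterm f sigma p n /\ Dterm f sigma p n <= (2^-1) ^+ n.
  move=> p pp; rewrite !geq_max => /andP[/andP[Np Kp] p2] n.
  have p0 : (0 < p%:R :> R) by rewrite ltr0n; exact: prime_gt0.
  set q := p%:R `^ delta.
  have q1 : 1 <= q.
    have := @ge0_ler_powR R delta (ltW d0) 1 p%:R.
    rewrite powR1 => -> //; rewrite ?nnegrE ?ler0n ?ler01 // ler1n.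
    exact: prime_gt0.
  have q0 : 0 < q by apply: lt_le_trans q1.
  have hg : forall m, cmod (f (p ^ m)%N) <= q ^+ m.
    case=> [|m].
      by rewrite expn0 f1 expr0 /cmod ComplexField.Normc.normc1.
    have := hN (p ^ m.+1)%N.
    rewrite mul1r natrX -powR_mulrn ?ler0n // powRAC powR_mulrn ?powR_ge0 //.
    apply; apply: (leq_trans Np); rewrite expnS; apply: leq_pmulr.
    by rewrite expn_gt0 prime_gt0.
  have hD : cmod (D_f f n p) <= (2 * q) ^+ n.
    rewrite /D_f Dmat_Mc.
    have := @detMc_bound R (fun m => f (p ^ m)%N) q q1 hg n 1 (fun i => f (p ^ i.+1)%N) (lexx 1).
    rewrite mul1r; apply => i; rewrite mul1r; exact: hg.
  have hs : p%:R `^ (n%:R * sigma) = (q * p%:R `^ r) ^+ n.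
    rewrite mulrC powRrM powR_mulrn ?powR_ge0 //; congr (_ ^+ _).
    rewrite /q -powRD; last by apply/implyP => _; rewrite gt_eqF.
    by rewrite /r addrC subrK.
  have hr : 4 <= p%:R `^ r.
    have -> : (4 : R) = (4 `^ r^-1) `^ r.
      by rewrite -powRrM mulVf ?gt_eqF // powRr1 // ler0n.
    apply: ge0_ler_powR; rewrite ?nnegrE ?powR_ge0 ?ler0n //.
    exact: ltW. by apply: (le_trans hK); rewrite ler_nat.
  have P0 : 0 < p%:R `^ r by apply: lt_le_trans hr; rewrite ltr0n.
  split; first by rewrite /Dterm divr_ge0 ?powR_ge0 ?cmod_ge0.
  rewrite /Dterm hs.
  apply: (le_trans (ler_pM (cmod_ge0 _ _) _ hD (lexx _))).
    by rewrite invr_ge0 exprn_ge0 // mulr_ge0 // ltW.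
  rewrite -exprVn -exprMn; apply: lerXn2r; rewrite ?nnegrE.
  - by rewrite mulr_ge0 // ?invr_ge0 ?mulr_ge0 // ltW.
  - by rewrite invr_ge0 ler0n.
  have -> : 2 * q * (q * p%:R `^ r)^-1 = 2 / p%:R `^ r.
    by field; rewrite !gt_eqF.
  rewrite ler_pdivrMr //; lra.
exists (maxn (maxn N K) 2); split.
  move=> p pp hp; have := @series_half_bound R (Dterm f sigma p).
  by case=> //; move=> n; case: (key p pp hp n).
exists 2 => p pp hp; have := @series_half_bound R (Dterm f sigma p).
by case=> //; move=> n; case: (key p pp hp n).
Qed.
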